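(* $g(5,3)=2$.
   Context: For integers $2\le k\le n$, let $S_n$ denote the set of permutations of $[n]=\{1,\dots,n\}$ (written as sequences), and $S_{n,k}$ the set of all sequences of $k$ distinct elements of $[n]$. A sequence $\kappa\in S_{n,k}$ is a subsequence of a permutation $\pi\in S_n$ if its elements appear in $\pi$ in the same relative order as in $\kappa$. A perfect sequence covering array ${\rm PSCA}(n,k)$ with multiplicity $\lambda$ (a positive integer) is a multiset $X$ of elements of $S_n$ such that every $\kappa\in S_{n,k}$ is a subsequence of exactly $\lambda$ elements of $X$ (counted with multiplicity). $g(n,k)$ denotes the smallest $\lambda$ for which a ${\rm PSCA}(n,k)$ with multiplicity $\lambda$ exists. *)

(* Defs.v *)
From mathcomp Require Import all_boot.
Set Implicit Arguments. Unset Strict Implicit. Unset Printing Implicit Defensive.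

Definition in_Sn (n : nat) (p : seq nat) : bool := perm_eq p (iota 1 n).

Definition in_Snk (n k : nat) (kappa : seq nat) : bool :=
  [&& size kappa == k, uniq kappa & all (fun x => (1 <= x <= n)%N) kappa].

(* A PSCA(n,k) with multiplicity lam: a multiset X (a list, multiplicities =
   repetitions) of elements of S_n such that every kappa in S_{n,k} is a
   subsequence of exactly lam elements of X, counted with multiplicity. *)
Definition is_PSCA (n k lam : nat) (X : seq (seq nat)) : Prop :=
  (0 < lam)%N /\ all (in_Sn n) X /\
  forall kappa, in_Snk n k kappa -> count (fun p => subseq kappa p) X = lam.

Definition g_is (n k lam : nat) : Prop :=
  (exists X, is_PSCA n k lam X) /\
  forall l, (exists X, is_PSCA n k l X) -> (lam <= l)%N.

(* Main.v *)
Require Import Defs.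
From mathcomp Require Import all_boot.
Set Implicit Arguments. Unset Strict Implicit. Unset Printing Implicit Defensive.

Definition alltrip : seq (seq nat) :=
  [:: [:: 1;2;3]; [:: 1;2;4]; [:: 1;2;5]; [:: 1;3;2]; [:: 1;3;4]; [:: 1;3;5]; [:: 1;4;2]; [:: 1;4;3]; [:: 1;4;5]; [:: 1;5;2]; [:: 1;5;3]; [:: 1;5;4]; [:: 2;1;3]; [:: 2;1;4]; [:: 2;1;5]; [:: 2;3;1]; [:: 2;3;4]; [:: 2;3;5]; [:: 2;4;1]; [:: 2;4;3]; [:: 2;4;5]; [:: 2;5;1]; [:: 2;5;3]; [:: 2;5;4]; [:: 3;1;2]; [:: 3;1;4]; [:: 3;1;5]; [:: 3;2;1]; [:: 3;2;4]; [:: 3;2;5]; [:: 3;4;1]; [:: 3;4;2]; [:: 3;4;5]; [:: 3;5;1]; [:: 3;5;2]; [:: 3;5;4]; [:: 4;1;2]; [:: 4;1;3]; [:: 4;1;5]; [:: 4;2;1]; [:: 4;2;3]; [:: 4;2;5]; [:: 4;3;1]; [:: 4;3;2]; [:: 4;3;5]; [:: 4;5;1]; [:: 4;5;2]; [:: 4;5;3]; [:: 5;1;2]; [:: 5;1;3]; [:: 5;1;4]; [:: 5;2;1]; [:: 5;2;3]; [:: 5;2;4]; [:: 5;3;1]; [:: 5;3;2]; [:: 5;3;4]; [:: 5;4;1]; [:: 5;4;2]; [:: 5;4;3]].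

Lemma in_alltrip kappa : in_Snk 5 3 kappa -> kappa \in alltrip.
Proof.
case/and3P; case: kappa => [|a [|b [|c [|d s]]]] //= _ U.
case/and4P=> /andP[a1 a5] /andP[b1 b5] /andP[c1 c5] _.
move: U a1 a5 b1 b5 c1 c5.
case: a => [|[|[|[|[|[|a]]]]]] //; case: b => [|[|[|[|[|[|b]]]]]] //;
  case: c => [|[|[|[|[|[|c]]]]]] //.
Qed.

Arguments alltrip : simpl never.

Fixpoint nocover (A : seq (seq nat)) (fuel : nat) (cands U : seq (seq nat)) : bool :=
  match fuel with
  | 0 => false
  | f.+1 =>
    match U with
    | [::] => false
    | t :: _ =>
      all (fun q => ~~ subseq t q ||
        let tq := [seq t0 <- A | subseq t0 q] in
        nocover A f [seq r <- cands | ~~ has (fun t' => subseq t' r) tq]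
                  [seq t' <- U | ~~ subseq t' q]) cands
    end
  end.

Lemma nocoverP A fuel : forall cands U Y, nocover A fuel cands U ->
  all (mem cands) Y ->
  (forall t, t \in A -> count (fun p => subseq t p) Y = (t \in U)) ->
  {subset U <= A} -> False.
Proof.
elim: fuel => [|f IH] cands U Y //=.
case: U => [|t U'] // Hall HY Hc HU.
have tA : t \in A by apply: HU; rewrite inE eqxx.
have := Hc t tA; rewrite inE eqxx /= => ct.
have : has (fun p => subseq t p) Y by rewrite has_count ct.
case/hasP=> q qY tq.
have qc : q \in cands by move/allP: HY => /(_ q qY).
move/allP: Hall => /(_ q qc); rewrite tq /= => Hn.
have pY := perm_to_rem qY.
have cnt t' : count (fun p => subseq t' p) Y =
   subseq t' q + count (fun p => subseq t' p) (rem q Y).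
  by rewrite (permP pY).
apply: (IH [seq r <- cands | ~~ has (fun t' => subseq t' r) [seq t0 <- A | subseq t0 q]] [seq t0 <- t :: U' | ~~ subseq t0 q] (rem q Y) Hn).
- apply/allP=> r rY; have rY' : r \in Y by apply: (mem_rem rY).
  change (r \in [seq r0 <- cands | ~~ has (fun t' => subseq t' r0) [seq t0 <- A | subseq t0 q]]); rewrite mem_filter; have rc : r \in cands by move/allP: HY => /(_ r rY').
  rewrite rc andbT.
  apply/hasPn=> t'; rewrite mem_filter => /andP[t'q t'A]; apply/negP=> t'r.
  have := Hc t' t'A; rewrite cnt t'q.
  have : 0 < count (fun p => subseq t' p) (rem q Y).
    by rewrite -has_count; apply/hasP; exists r.
  by case: (t' \in _); case: count.
- move=> t' t'A; have := Hc t' t'A; rewrite cnt mem_filter.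
  by case: (subseq t' q) => /=; case: (t' \in _); case: count.
- by move=> x; rewrite mem_filter => /andP[_ /HU].
Qed.

Definition X2 : seq (seq nat) :=
 [:: [:: 1;2;3;4;5]; [:: 1;2;4;3;5]; [:: 1;5;3;4;2]; [:: 5;1;4;3;2];
     [:: 3;4;1;5;2]; [:: 4;2;1;5;3]; [:: 3;2;1;5;4]; [:: 4;2;5;1;3];
     [:: 3;2;5;1;4]; [:: 5;2;3;4;1]; [:: 5;2;4;3;1]; [:: 4;3;5;1;2]].

Lemma nocover_main : nocover alltrip 100 (permutations (iota 1 5)) alltrip.
Proof. by vm_compute. Qed.

Theorem proposition1 : g_is 5 3 2.
Proof.
split.
  exists X2; split => //; split; first by vm_compute.
  move=> kappa /in_alltrip.
  have : all (fun t => count (fun p => subseq t p) X2 == 2) alltrip by vm_compute.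
  by move/allP=> H /H /eqP.
move=> l [X [l0 [HX Hc]]].
case: l l0 Hc => [|[|l]] // _ Hc.
exfalso; apply: (nocoverP nocover_main (Y := X)) => //.
- apply/allP=> p pX; rewrite /= mem_permutations.
  by move/allP: HX => /(_ p pX).
- move=> t tA; rewrite tA; apply: Hc.
  have : all (in_Snk 5 3) alltrip by vm_compute.
  by move/allP=> /(_ t tA).
Qed.
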